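(* Under the setting of the context (arbitrary $S^{(0)},F_2^{(0)}$, $A_2\neq0$, $Q^\top Q=I_k$, $\mu_0>0$, $\rho>1$), there is a constant $\gamma\ge 0$ such that $\|A_2-QS^{(k)}-F_2^{(k)}\|_F\le \frac{\gamma}{\mu_k}$ for all $k=1,2,\dots$.
   Context: For a matrix $X$, $\|X\|_1=\sum_{i,j}|X_{ij}|$, $\|X\|_\infty=\max_{i,j}|X_{ij}|$, $\|X\|_F$ the Frobenius norm, $\langle Y,X\rangle=\mathrm{Trace}(Y^\top X)$. The shrinkage operator $\mathcal{S}_\tau$ acts entrywise by $\mathcal{S}_\tau(x)=\mathrm{sign}(x)\max\{|x|-\tau,0\}$. Augmented Lagrangian: $L(S,F_2,Y,\mu)=\|F_2\|_1+\langle Y,A_2-QS-F_2\rangle+\frac{\mu}{2}\|A_2-QS-F_2\|_F^2$, with $A_2\in\mathbb{R}^{m\times n}$, $Q\in\mathbb{R}^{m\times k}$, $Q^\top Q=I_k$. ALM iteration: $Y^{(0)}=A_2/\|A_2\|_\infty$, and for $k\ge0$: $S^{(k+1)}=Q^\top(A_2-F_2^{(k)}+\frac{1}{\mu_k}Y^{(k)})$, $F_2^{(k+1)}=\mathcal{S}_{1/\mu_k}(A_2-QS^{(k+1)}+\frac{1}{\mu_k}Y^{(k)})$, $Y^{(k+1)}=Y^{(k)}+\mu_k(A_2-QS^{(k+1)}-F_2^{(k+1)})$, $\mu_{k+1}=\rho\mu_k$. *)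

(* Defs.v *)
From HB Require Import structures.
From mathcomp Require Import all_boot all_order all_algebra.
Set Implicit Arguments. Unset Strict Implicit. Unset Printing Implicit Defensive.
Import Order.TTheory GRing.Theory Num.Theory.
Local Open Scope ring_scope.

Definition l1norm (R : rcfType) m n (X : 'M[R]_(m, n)) : R :=
  \sum_(i < m) \sum_(j < n) `|X i j|.

Definition infnorm (R : rcfType) m n (X : 'M[R]_(m, n)) : R :=
  \big[Num.max/0]_(i < m) \big[Num.max/0]_(j < n) `|X i j|.

Definition frob (R : rcfType) m n (X : 'M[R]_(m, n)) : R :=
  Num.sqrt (\sum_(i < m) \sum_(j < n) X i j ^+ 2).

Definition mxinner (R : rcfType) m n (Y X : 'M[R]_(m, n)) : R :=
  \tr (Y^T *m X).

Definition shrink (R : rcfType) (tau x : R) : R :=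
  Num.sg x * Num.max (`|x| - tau) 0.

Definition shrinkmx (R : rcfType) m n (tau : R) (X : 'M[R]_(m, n)) : 'M[R]_(m, n) :=
  map_mx (shrink tau) X.

(* Main.v *)
Require Import Defs.
From HB Require Import structures.
From mathcomp Require Import all_boot all_order all_algebra.
From mathcomp Require Import ring lra.
Import Order.TTheory GRing.Theory Num.Theory.
Local Open Scope ring_scope.

Lemma shrink_clamp (R : rcfType) (t x : R) : 0 <= t -> `|x - shrink t x| <= t.
Proof.
move=> t0; rewrite /shrink.
case: (ltrgt0P x) => hx.
- rewrite gtr0_sg // mul1r.
  case: (ger0P (x - t)) => h.
    have -> : x - (x - t) = t by ring.
    by rewrite ger0_norm.
  rewrite subr0 gtr0_norm //; lra.
- rewrite ltr0_sg // mulN1r.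
  case: (ger0P (- x - t)) => h.
    have -> : x - - (- x - t) = - t by ring.
    by rewrite normrN ger0_norm.
  rewrite oppr0 subr0 ltr0_norm //; lra.
- by rewrite hx sgr0 mul0r subr0 normr0.
Qed.

Lemma le_sum_term (R : rcfType) m (F : 'I_m -> R) i :
  (forall k, 0 <= F k) -> F i <= \sum_k F k.
Proof.
move=> F0; rewrite (bigD1 i) //= lerDl; exact: sumr_ge0.
Qed.

Lemma frob_le_l1 (R : rcfType) m n (X : 'M[R]_(m, n)) : frob X <= l1norm X.
Proof.
have L0 : 0 <= l1norm X by apply: sumr_ge0 => i _; apply: sumr_ge0.
have le : forall i j, `|X i j| <= l1norm X.
  move=> i j; apply: (le_trans (y := \sum_(j < n) `|X i j|)).
    by apply: (@le_sum_term R n (fun j => `|X i j|) j) => k.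
  apply: (@le_sum_term R m (fun i => \sum_(j < n) `|X i j|) i).
  by move=> k; apply: sumr_ge0.
rewrite /frob -(ger0_norm L0) -sqrtr_sqr ler_sqrt ?sqr_ge0 //.
apply: (@le_trans _ _ (\sum_(i < m) \sum_(j < n) `|X i j| * l1norm X)).
  apply: ler_sum => i _; apply: ler_sum => j _.
  by rewrite -real_normK ?num_real // expr2 ler_wpM2l.
rewrite expr2 {2}/l1norm mulr_suml; apply: ler_sum => i _.
by rewrite mulr_suml.
Qed.

Theorem mainTheorem2 (R : rcfType) (m n r : nat)
  (A2 : 'M[R]_(m, n)) (Q : 'M[R]_(m, r)) (mu0 rho : R)
  (Sk : nat -> 'M[R]_(r, n)) (F2 Y : nat -> 'M[R]_(m, n)) (mu : nat -> R) :
  A2 != 0 ->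
  Q^T *m Q = 1%:M ->
  0 < mu0 -> 1 < rho ->
  mu 0%N = mu0 ->
  Y 0%N = (infnorm A2)^-1 *: A2 ->
  (forall k : nat, Sk k.+1 = Q^T *m (A2 - F2 k + (mu k)^-1 *: Y k)) ->
  (forall k : nat, F2 k.+1 = shrinkmx (mu k)^-1 (A2 - Q *m Sk k.+1 + (mu k)^-1 *: Y k)) ->
  (forall k : nat, Y k.+1 = Y k + mu k *: (A2 - Q *m Sk k.+1 - F2 k.+1)) ->
  (forall k : nat, mu k.+1 = rho * mu k) ->
  exists gamma : R, 0 <= gamma /\
    forall k : nat, (1 <= k)%N -> frob (A2 - Q *m Sk k - F2 k) <= gamma / mu k.
Proof.
move=> _ _ mu0p rho1 Hmu0 _ _ HF HY Hmu.
have mup : forall k, 0 < mu k.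
  elim=> [|k IH]; first by rewrite Hmu0.
  by rewrite Hmu mulr_gt0 // (lt_trans ltr01).
have Yb : forall k i j, `|Y k.+1 i j| <= 1.
  move=> k i j.
  have mk := mup k.
  set P := (Q *m Sk k.+1) i j.
  have -> : Y k.+1 i j = mu k * ((A2 i j - P + (mu k)^-1 * Y k i j)
        - shrink (mu k)^-1 (A2 i j - P + (mu k)^-1 * Y k i j)).
    rewrite HY HF /shrinkmx !mxE /P !mxE.
    by field; rewrite lt0r_neq0.
  rewrite normrM (gtr0_norm mk) -(mulfV (lt0r_neq0 mk)) ler_pM2l //.
  by apply: shrink_clamp; rewrite invr_ge0 ltW.
set c := (m * n)%:R + l1norm (Y 0%N).
have l1Y0 : 0 <= l1norm (Y 0%N) by apply: sumr_ge0 => i _; apply: sumr_ge0.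
have Yl1 : forall k, l1norm (Y k) <= c.
  case=> [|k]; first by rewrite /c lerDr.
  apply: (@le_trans _ _ (m * n)%:R); last by rewrite /c lerDl.
  apply: (@le_trans _ _ (\sum_(i < m) \sum_(j < n) (1 : R))).
    by apply: ler_sum => i _; apply: ler_sum => j _; apply: Yb.
  by rewrite big_const_ord iter_addr addr0 big_const_ord iter_addr addr0 -mulrnA mulnC.
have c0 : 0 <= c by rewrite /c addr_ge0.
exists (2 * c * rho); split; first by rewrite !mulr_ge0 // ltW // (lt_trans ltr01).
case=> [//|k] _.
apply: (@le_trans _ _ (l1norm (A2 - Q *m Sk k.+1 - F2 k.+1))); first exact: frob_le_l1.
have mk := mup k.
apply: (@le_trans _ _ ((mu k)^-1 * (l1norm (Y k.+1) + l1norm (Y k)))).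
  rewrite /l1norm mulrDr !mulr_sumr -big_split /=; apply: ler_sum => i _.
  rewrite !mulr_sumr -big_split /=; apply: ler_sum => j _.
  have -> : (A2 - Q *m Sk k.+1 - F2 k.+1) i j = (mu k)^-1 * (Y k.+1 i j - Y k i j).
    rewrite HY !mxE; by field; rewrite lt0r_neq0.
  rewrite normrM gtr0_norm ?invr_gt0 // -mulrDr ler_pM2l ?invr_gt0 //.
  exact: ler_normB.
rewrite Hmu.
have : l1norm (Y k.+1) + l1norm (Y k) <= 2 * c by have := Yl1 k; have := Yl1 k.+1; lra.
move=> h.
have rp : 0 < rho by apply: lt_trans ltr01 _.
rewrite invfM mulrA.
apply: (@le_trans _ _ ((mu k)^-1 * (2 * c))).
  by rewrite ler_pM2l // invr_gt0.
by rewrite mulfK ?lt0r_neq0 // mulrC.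
Qed.
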